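(* Let $X\subset\mathbb{R}^n$ be a closed set which is the closure of its interior, $f:X\to\mathbb{R}^n$ locally Lipschitz, and suppose $\dot x=f(x)$ is forward complete with flow $\varphi_t$. Let $K$ be a closed convex cone with nonempty interior and suppose the system is strongly monotone: $\xi_1\succ\xi_2$ implies $\varphi_t(\xi_1)\gg\varphi_t(\xi_2)$ for all $t>0$, $\xi_1,\xi_2\in X$. Let $v\in\operatorname{int}(K)$, $|v|=1$, with $X$ invariant under translation by $v$ and $\varphi_t(\xi+\lambda v)=\varphi_t(\xi)+\lambda v$ for all $\lambda\in\mathbb{R}$, $\xi\in X$, $t\ge0$. Let $V(x)=\inf\{\alpha\in\mathbb{R}:x\preceq\alpha v\}$. Then for all $\xi_1,\xi_2\in X$ and all $t>0$, $$V(\varphi_t(\xi_1)-\varphi_t(\xi_2))\le V(\xi_1-\xi_2),$$ and the inequality is strict whenever $\xi_1-\xi_2\notin\operatorname{span}\{v\}$.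
   Context: The cone $K$ satisfies $K+K\subset K$, $\alpha K\subset K$ for $\alpha\ge0$, $K\cap(-K)=\{0\}$. $\xi_1\succeq\xi_2$ iff $\xi_1-\xi_2\in K$; $\xi_1\succ\xi_2$ iff additionally $\xi_1\neq\xi_2$; $\xi_1\gg\xi_2$ iff $\xi_1-\xi_2\in\operatorname{int}(K)$. Forward complete means every solution is uniquely defined in $X$ on an interval containing $[0,\infty)$ in its interior. *)

(* Defs.v *)
From HB Require Import structures.
From mathcomp Require Import all_boot all_order all_algebra.
From mathcomp Require Import all_classical all_reals all_analysis.
Set Implicit Arguments. Unset Strict Implicit. Unset Printing Implicit Defensive.
Import Order.TTheory GRing.Theory Num.Theory.
Import numFieldNormedType.Exports.
Local Open Scope classical_set_scope.
Local Open Scope ring_scope.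

Section Defs.
Context {R : realType} {n : nat}.
Notation V := 'rV[R]_n.

Definition euclid_norm (x : V) : R := Num.sqrt (\sum_(i < n) x ord0 i ^+ 2).

Definition is_cone (K : set V) : Prop :=
  [/\ forall x y, K x -> K y -> K (x + y),
      forall (a : R) x, 0 <= a -> K x -> K (a *: x)
    & forall x, K x -> K (- x) -> x = 0].

Definition cle (K : set V) (x y : V) : Prop := K (y - x).
Definition clt (K : set V) (x y : V) : Prop := K (y - x) /\ x <> y.
Definition cllt (K : set V) (x y : V) : Prop := interior K (y - x).

Definition locally_lipschitz_on (X : set V) (f : V -> V) : Prop :=
  forall xi, X xi -> exists2 U : set V, nbhs xi U &
    exists L : R, forall x y, U x -> X x -> U y -> X y ->
      `|f x - f y| <= L * `|x - y|.

Definition is_solution (X : set V) (f : V -> V) (a b : \bar R) (x : R -> V) : Prop :=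
  forall t : R, (a < t%:E)%E -> (t%:E < b)%E ->
    X (x t) /\ derivable x t 1 /\ 'D_1 x t = f (x t).

(* forward completeness, with phi the associated (forward) flow:
   for every initial condition xi in X there is a solution defined in X on an
   interval (a, +oo) with a < 0 (an interval containing [0,+oo) in its
   interior), every solution on an open interval containing 0 with initial
   condition xi coincides with it (uniqueness), and phi t xi is its value at
   time t >= 0. *)
Definition forward_complete_flow (X : set V) (f : V -> V) (phi : R -> V -> V) : Prop :=
  forall xi, X xi -> exists a : R, a < 0 /\ exists x : R -> V,
    [/\ x 0 = xi, is_solution X f a%:E +oo%E x,
        (forall (b c : \bar R) (y : R -> V), (b < 0%:E)%E -> (0%:E < c)%E ->
            y 0 = xi -> is_solution X f b c y ->
            forall t : R, (b < t%:E)%E -> (t%:E < c)%E -> a < t -> y t = x t)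
      & forall t, 0 <= t -> phi t xi = x t].

Definition strongly_monotone (X : set V) (K : set V) (phi : R -> V -> V) : Prop :=
  forall xi1 xi2, X xi1 -> X xi2 -> clt K xi2 xi1 ->
    forall t, 0 < t -> cllt K (phi t xi2) (phi t xi1).

Definition Vfun (K : set V) (v : V) (x : V) : R :=
  inf [set alpha : R | cle K x (alpha *: v)].

End Defs.

(* Main.v *)
Require Import Defs.
From HB Require Import structures.
From mathcomp Require Import all_boot all_order all_algebra.
From mathcomp Require Import all_classical all_reals all_analysis.
From mathcomp Require Import lra.
Import Order.TTheory GRing.Theory Num.Theory.
Import numFieldNormedType.Exports.
Local Open Scope classical_set_scope.
Local Open Scope ring_scope.

Section S.
Context (R : realType) (n : nat).
Implicit Types (K : set 'rV[R]_n) (v x : 'rV[R]_n).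

Lemma nbhs_r (x : 'rV[R]_n) (A : set 'rV[R]_n) : nbhs x A ->
  exists2 r : R, 0 < r & forall y, `|x - y| < r -> A y.
Proof.
by move=> /nbhs_normP [e e0 He]; exists e => // y hy; apply: He.
Qed.

Arguments nbhs_r {x A}.
Variables (K : set 'rV[R]_n) (v : 'rV[R]_n).
Hypothesis cK : is_cone K.
Hypothesis clK : closed K.
Hypothesis vK : interior K v.
Hypothesis v0 : v != 0.

Let S x := [set a : R | cle K x (a *: v)].

Lemma S_up x a b : S x a -> a <= b -> S x b.
Proof.
case: cK => Kadd Ksc _; rewrite /S /cle /= => Ha ab.
have -> : b *: v - x = (a *: v - x) + (b - a) *: v by rewrite scalerBl [RHS]addrC addrA subrK.
apply: Kadd => //; apply: Ksc; first by rewrite subr_ge0.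
exact: nbhs_singleton vK.
Qed.

Lemma S_ne x : S x !=set0.
Proof.
case: cK => _ Ksc _.
have [r r0 Hr] := nbhs_r vK.
pose a := (`|x| + 1) / r.
have a0 : 0 < a by rewrite divr_gt0 // ltr_wpDl.
exists a; rewrite /S /cle /=.
have -> : a *: v - x = a *: (v - a^-1 *: x).
  by rewrite scalerBr scalerA mulfV ?gt_eqF // scale1r.
apply: Ksc; first exact: ltW.
apply: Hr; rewrite opprB addrC subrK normrZ ger0_norm ?invr_ge0 ?ltW //.
rewrite /a invf_div mulrAC ltr_pdivrMr ?ltr_wpDl // ltr_pM2l // ltrDl //.
Qed.

Lemma S_lb x : has_lbound (S x).
Proof.
case: cK => _ Ksc Kpt.
have nK : ~ K (- v).
  move=> Kv; move/negP: v0; apply; apply/eqP; apply: Kpt => //.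
  exact: nbhs_singleton vK.
have : ~ (\forall y \near (- v), ~ K y) -> K (- v) by move: clK; rewrite closedE => /(_ (- v)).
move=> H.
have : \forall y \near (- v), ~ K y by apply: contrapT => /H.
move=> /nbhs_r [r r0 Hr].
pose b := (`|x| + 1) / r.
have b0 : 0 < b by rewrite divr_gt0 // ltr_wpDl.
exists (- b) => a Sa; rewrite leNgt; apply/negP => ab.
have c0 : 0 < - a by lra.
have : K ((- a)^-1 *: (a *: v - x)).
  by apply: Ksc => //; rewrite invr_ge0 ltW.
have -> : (- a)^-1 *: (a *: v - x) = - v - (- a)^-1 *: x.
  have an : a != 0 by rewrite -oppr_eq0 gt_eqF.
  by rewrite scalerBr scalerA invrN mulNr mulVf // scaleNr scale1r.
apply: Hr; rewrite opprD !opprK addrA addNr add0r normrZ ger0_norm ?invr_ge0 ?ltW //.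
rewrite mulrC ltr_pdivrMr //.
have : b < - a by lra.
rewrite /b ltr_pdivrMr // => h.
nra.
Qed.

Lemma S_hasinf x : has_inf (S x).
Proof. by split; [exact: S_ne | exact: S_lb]. Qed.

Lemma S_inf x : S x (inf (S x)).
Proof.
move: clK; rewrite closedE => /(_ (inf (S x) *: v - x)); apply.
move=> /nbhs_r [r r0 Hr].
pose e := r / (`|v| + 1).
have e0 : 0 < e by rewrite divr_gt0 // ltr_wpDl.
have [c Sc ce] := inf_adherent e0 (S_hasinf x).
have ic : inf (S x) <= c by apply: ge_inf (S_lb x) _ Sc.
apply: (Hr (c *: v - x)) => //.
rewrite opprB addrA subrK -scalerBl normrZ.
have he : e * (`|v| + 1) = r by rewrite /e mulfVK // gt_eqF // ltr_wpDl.
have nv : 0 <= `|v| by [].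
rewrite ler0_norm; last by lra.
nra.
Qed.

Lemma int_lt x a : interior K (a *: v - x) -> inf (S x) < a.
Proof.
move=> /nbhs_r [r r0 Hr].
pose e := r / (`|v| + 1).
have e0 : 0 < e by rewrite divr_gt0 // ltr_wpDl.
have Sa : S x (a - e).
  apply: Hr; rewrite opprB addrA subrK -scalerBl normrZ.
  have he : e * (`|v| + 1) = r by rewrite /e mulfVK // gt_eqF // ltr_wpDl.
  have nv : 0 <= `|v| by [].
  rewrite (_ : a - (a - e) = e); last by lra.
  rewrite gtr0_norm //; nra.
have := ge_inf (S_lb x) Sa; lra.
Qed.

End S.

Theorem lemma3 (R : realType) (n : nat) (X : set 'rV[R]_n)
  (f : 'rV[R]_n -> 'rV[R]_n) (phi : R -> 'rV[R]_n -> 'rV[R]_n)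
  (K : set 'rV[R]_n) (v : 'rV[R]_n) :
  closed X -> closure (interior X) = X ->
  locally_lipschitz_on X f ->
  forward_complete_flow X f phi ->
  is_cone K -> convex_set K -> closed K -> interior K !=set0 ->
  strongly_monotone X K phi ->
  interior K v -> euclid_norm v = 1 ->
  (forall xi (lambda : R), X xi -> X (xi + lambda *: v)) ->
  (forall xi (lambda t : R), X xi -> 0 <= t ->
     phi t (xi + lambda *: v) = phi t xi + lambda *: v) ->
  forall xi1 xi2, X xi1 -> X xi2 -> forall t : R, 0 < t ->
    Vfun K v (phi t xi1 - phi t xi2) <= Vfun K v (xi1 - xi2) /\
    (~ (exists c : R, xi1 - xi2 = c *: v) ->
       Vfun K v (phi t xi1 - phi t xi2) < Vfun K v (xi1 - xi2)).
Proof.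
move=> _ _ _ _ cK _ clK _ smon vK nv1 Xinv phiv xi1 xi2 X1 X2 t t0.
have v0 : v != 0.
  apply/negP => /eqP v0; move: nv1; rewrite /euclid_norm v0.
  rewrite big1 ?sqrtr0; first by move/eqP; rewrite eq_sym oner_eq0.
  by move=> i _; rewrite mxE expr0n.
have claim : forall a, cle K (xi1 - xi2) (a *: v) ->
   Vfun K v (phi t xi1 - phi t xi2) <= a /\
   (xi1 <> xi2 + a *: v -> Vfun K v (phi t xi1 - phi t xi2) < a).
  move=> a Ha.
  have Ha' : K ((xi2 + a *: v) - xi1).
    by move: Ha; rewrite /cle opprB addrAC addrC.
  have strict : xi1 <> xi2 + a *: v -> Vfun K v (phi t xi1 - phi t xi2) < a.
    move=> ne; rewrite /Vfun; apply: (@int_lt _ _ _ _ cK clK vK v0).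
    have := smon _ _ (Xinv _ a X2) X1 (conj Ha' ne) t t0.
    rewrite /cllt phiv ?(ltW t0) //.
    by rewrite opprB addrA [a *: v + _]addrC.
  split; last exact: strict.
  have [e|ne] := pselect (xi1 = xi2 + a *: v); last first.
    by apply: ltW; apply: strict.
  rewrite e phiv ?(ltW t0) // addrAC subrr add0r /Vfun.
  apply: (ge_inf (@S_lb _ _ _ _ cK clK vK v0 (a *: v))).
  case: cK => _ Ksc _; rewrite /= /cle subrr -(scale0r v).
  by apply: Ksc => //; exact: nbhs_singleton vK.
have Hinf := @S_inf _ _ _ _ cK clK vK v0 (xi1 - xi2).
have [h1 h2] := claim _ Hinf.
split => // nspan; apply: h2 => e; apply: nspan.
by exists (inf [set a | cle K (xi1 - xi2) (a *: v)]); rewrite {1}e addrAC subrr add0r.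
Qed.
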